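(* Let $k \geq 2$ be an integer and $n := 2^k$. Let $R_k$ denote either $R_k(t) := |P_k(e^{it})|^2$ or $R_k(t) := |Q_k(e^{it})|^2$ (the statement holds for each choice). Then the equation $R_k(t) = n$ has at least $n/4 + 1$ distinct zeros in $K$. Moreover, with $t_j := 2\pi j/n$, there are at least $n/2 + 2$ values of $j \in \{0,1,\ldots,n-1\}$ for which the closed interval $[t_j, t_{j+1}]$ contains at least one solution $t$ of $R_k(t) = n$.
   Context: The Rudin-Shapiro polynomials are defined recursively by $P_0(z) := 1$, $Q_0(z) := 1$, and for $k = 0,1,2,\ldots$: $P_{k+1}(z) := P_k(z) + z^{2^k} Q_k(z)$, $Q_{k+1}(z) := P_k(z) - z^{2^k} Q_k(z)$. Thus $P_k$ and $Q_k$ are polynomials of degree $n-1$, $n = 2^k$, with all coefficients in $\{-1,1\}$. $K := \mathbb{R} \pmod{2\pi}$, i.e. zeros are counted on one period $[0,2\pi)$. *)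

(* Defs.v *)
From Stdlib Require Import Reals ZArith Arith List.
Open Scope R_scope.

(* Polynomials with integer coefficients are represented by their
   coefficient functions  nat -> Z  (coefficient of z^j). *)

Definition coef_add_shift (A : nat -> Z) (m : nat) (B : nat -> Z) : nat -> Z :=
  fun j => (A j + (if Nat.leb m j then B (j - m)%nat else 0))%Z.

Definition coef_sub_shift (A : nat -> Z) (m : nat) (B : nat -> Z) : nat -> Z :=
  fun j => (A j - (if Nat.leb m j then B (j - m)%nat else 0))%Z.

(* Rudin-Shapiro pair (P_k, Q_k) as coefficient functions:
   P_0 = Q_0 = 1,  P_{k+1} = P_k + z^{2^k} Q_k,  Q_{k+1} = P_k - z^{2^k} Q_k. *)
Fixpoint RS (k : nat) : (nat -> Z) * (nat -> Z) :=
  match k with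
  | O => (fun j => if Nat.eqb j 0 then 1%Z else 0%Z,
          fun j => if Nat.eqb j 0 then 1%Z else 0%Z)
  | S k' => let (P, Q) := RS k' in
            (coef_add_shift P (2 ^ k') Q, coef_sub_shift P (2 ^ k') Q)
  end.

Definition Pcoef (k : nat) : nat -> Z := fst (RS k).
Definition Qcoef (k : nat) : nat -> Z := snd (RS k).

Fixpoint rsum (N : nat) (f : nat -> R) : R :=
  match N with
  | O => 0
  | S N' => rsum N' f + f N'
  end.

(* For a polynomial with coefficients c of degree < N,
   |p(e^{it})|^2 = (Re p(e^{it}))^2 + (Im p(e^{it}))^2. *)
Definition sqmod_on_circle (c : nat -> Z) (N : nat) (t : R) : R :=
  (rsum N (fun j => IZR (c j) * cos (INR j * t))) ^ 2
  + (rsum N (fun j => IZR (c j) * sin (INR j * t))) ^ 2.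

(* R_k(t) = |P_k(e^{it})|^2  (usesP = true)  or  |Q_k(e^{it})|^2 (usesP = false).
   P_k, Q_k have degree 2^k - 1, so summing over j < 2^k is exact. *)
Definition Rk (usesP : bool) (k : nat) (t : R) : R :=
  sqmod_on_circle (if usesP then Pcoef k else Qcoef k) (2 ^ k) t.

(* Main.v *)
Require Import Defs.
From Stdlib Require Import Reals ZArith Arith List Lia Lra.
Open Scope R_scope.

From mathcomp Require all_boot all_algebra Rstruct zify.
Lemma cos_rec l t : cos (INR (S (S l)) * t) = 2 * cos t * cos (INR (S l) * t) - cos (INR l * t).
Proof.
replace (INR (S (S l)) * t) with (INR (S l) * t + t) by (rewrite !S_INR; ring).
replace (INR l * t) with (INR (S l) * t - t) by (rewrite !S_INR; ring).
rewrite cos_plus, cos_minus. ring.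
Qed.

Lemma rsum_ext N f g : (forall i, (i < N)%nat -> f i = g i) -> rsum N f = rsum N g.
Proof.
induction N; intros H; simpl; [reflexivity|].
rewrite IHN by (intros; apply H; lia). rewrite H by lia. reflexivity.
Qed.

Module CP.
Import all_boot all_algebra Rstruct zify.
Import GRing.Theory.
Local Open Scope ring_scope.

Fixpoint Tp (l : nat) : {poly R} * {poly R} :=
  match l with
  | O => (1, 'X)
  | S l' => ((Tp l').2, 2%:P * 'X * (Tp l').2 - (Tp l').1)
  end.
Definition T l := (Tp l).1.

Lemma Tp_horner l t : ((Tp l).1.[cos t] = cos (INR l * t))
  /\ ((Tp l).2.[cos t] = cos (INR (S l) * t)).
Proof.
elim: l => [|l [IH1 IH2]] /=.
  rewrite hornerC hornerX; split; [|congr cos]; rewrite /INR.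
  - by rewrite Rmult_0_l cos_0.
  - by rewrite Rmult_1_l.
split; first by [].
rewrite hornerD hornerN !hornerM hornerC hornerX IH1 IH2 cos_rec.
by [].
Qed.

Lemma T_horner l t : (T l).[cos t] = cos (INR l * t).
Proof. exact: (Tp_horner l t).1. Qed.

Lemma Tp_size l : (size (Tp l).1 <= l.+1)%N /\ (size (Tp l).2 <= l.+2)%N.
Proof.
elim: l => [|l [IH1 IH2]] /=.
  by rewrite size_poly1 size_polyX.
split; first by [].
apply: leq_trans (size_polyD _ _) _.
rewrite geq_max size_polyN.
have h1 : (size (2%:P * 'X : {poly R})%R <= 2)%N.
  apply: leq_trans (size_polyMleq _ _) _; rewrite size_polyX.
  rewrite addn2 /=; exact: size_polyC_leq1.
have h2 := size_polyMleq (2%:P * 'X : {poly R}) (Tp l).2.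
apply/andP; split; last by apply: (leq_trans IH1); lia.
apply: (leq_trans h2). move: h1 IH2. generalize (size (2%:P * 'X : {poly R})%R) (size (Tp l).2). clear. lia.
Qed.

Lemma T_size l : (size (T l) <= l.+1)%N.
Proof. exact: (Tp_size l).1. Qed.

Fixpoint psum (N : nat) (F : nat -> {poly R}) : {poly R} :=
  match N with O => 0 | S N' => psum N' F + F N' end.

Lemma psum_horner N (F : nat -> {poly R}) x : (psum N F).[x] = rsum N (fun i => (F i).[x]).
Proof. elim: N => [|N IH] /=; first by rewrite horner0. by rewrite hornerD IH. Qed.

Lemma psum_size N (F : nat -> {poly R}) b : (forall i, (i < N)%N -> (size (F i) <= b)%N) -> (size (psum N F) <= b)%N.
Proof.
elim: N => [|N IH] H /=; first by rewrite size_poly0.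
apply: leq_trans (size_polyD _ _) _.
rewrite geq_max H // IH // => i Hi; apply: H; lia.
Qed.

Lemma inIn (x : R) (L : list R) : x \in L -> In x L.
Proof.
elim: L => [|y L IH] //=; rewrite in_cons => /orP [/eqP ->|/IH]; auto.
Qed.

Lemma NoDup_uniq (L : list R) : NoDup L -> uniq L.
Proof.
elim: L => [|x L IH] //= /NoDup_cons_iff [H1 H2].
rewrite IH // andbT; apply/negP => /inIn; auto.
Qed.

Local Open Scope R_scope.
Lemma cospoly (N D : nat) (a : nat -> nat -> R) (d : nat -> nat -> nat) (c : R) :
  (forall j l, Peano.lt j N -> Peano.lt l N -> Peano.le (d j l) D) ->
  exists p : R -> R,
    (forall t, c + rsum N (fun j => rsum N (fun l => a j l * cos (INR (d j l) * t))) = p (cos t))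
    /\ ((forall x, p x = 0) \/
        (forall L : list R, NoDup L -> (forall x, In x L -> p x = 0) -> Peano.le (length L) D)).
Proof.
move=> Hd.
pose q : {poly R} := (c%:P + psum N (fun j => psum N (fun l => a j l *: T (d j l))))%R.
have Hs : (size q <= D.+1)%N.
  apply: leq_trans (size_polyD _ _) _; rewrite geq_max.
  apply/andP; split; first by apply: leq_trans (size_polyC_leq1 _) _.
  apply: psum_size => j Hj; apply: psum_size => l Hl.
  apply: leq_trans (size_scale_leq _ _) _; apply: leq_trans (T_size _) _.
  have := Hd j l; move/ltP: Hj => Hj; move/ltP: Hl => Hl; move=> /(_ Hj Hl) /leP; lia.
exists (fun x => q.[x]); split.
  move=> t; rewrite /q hornerD hornerC psum_horner; congr (_ + _)%R.
  apply: rsum_ext => j _; rewrite psum_horner; apply: rsum_ext => l _.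
  by rewrite hornerZ T_horner.
case: (eqVneq q 0%R) => [->|qn0]; [left => x; exact: horner0 | right].
move=> L HL Hr.
have := max_poly_roots qn0 _ (NoDup_uniq L HL).
have -> : all (root q) L.
  apply/allP => x /inIn Hx; apply/eqP; exact: Hr.
move=> /(_ isT) H.
have -> : length L = size L by elim: (L) => //= x L' ->.
move: (leq_trans H Hs) => h; apply/leP; exact: h.
Qed.
End CP.

Definition Cs (c : nat -> Z) (N : nat) (t : R) := rsum N (fun j => IZR (c j) * cos (INR j * t)).
Definition Sn (c : nat -> Z) (N : nat) (t : R) := rsum N (fun j => IZR (c j) * sin (INR j * t)).

Lemma Rk_eq b k t : Rk b k t = (Cs (if b then Pcoef k else Qcoef k) (2^k) t)^2 + (Sn (if b then Pcoef k else Qcoef k) (2^k) t)^2.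
Proof. reflexivity. Qed.

Lemma Pcoef_S k : Pcoef (S k) = coef_add_shift (Pcoef k) (2^k) (Qcoef k).
Proof. unfold Pcoef, Qcoef; simpl; destruct (RS k); reflexivity. Qed.
Lemma Qcoef_S k : Qcoef (S k) = coef_sub_shift (Pcoef k) (2^k) (Qcoef k).
Proof. unfold Pcoef, Qcoef; simpl; destruct (RS k); reflexivity. Qed.

Lemma RS_zero k : forall j, (2^k <= j)%nat -> Pcoef k j = 0%Z /\ Qcoef k j = 0%Z.
Proof.
induction k; intros j Hj.
- unfold Pcoef, Qcoef; simpl in *. destruct j; [lia|]. simpl. auto.
- rewrite Pcoef_S, Qcoef_S. unfold coef_add_shift, coef_sub_shift.
  simpl in Hj.
  assert (Hl : Nat.leb (2^k) j = true) by (apply Nat.leb_le; lia).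
  rewrite Hl. destruct (IHk j) as [H1 H2]; [lia|].
  destruct (IHk (j - 2^k)%nat) as [H3 H4]; [lia|].
  rewrite H1, H4. auto.
Qed.

Lemma rsum_split a b f : rsum (a + b) f = rsum a f + rsum b (fun i => f (a + i)%nat).
Proof.
induction b; simpl.
- rewrite Nat.add_0_r. ring.
- rewrite Nat.add_succ_r. simpl. rewrite IHb. ring.
Qed.

Lemma rsum_lin N (f g : nat -> R) (a b : R) :
  rsum N (fun i => a * f i + b * g i) = a * rsum N f + b * rsum N g.
Proof. induction N; simpl; [ring|]. rewrite IHN. ring. Qed.

Lemma rsum_lin3 N (f g h : nat -> R) (a b c : R) :
  rsum N (fun i => a * f i + b * g i + c * h i) = a * rsum N f + b * rsum N g + c * rsum N h.
Proof. induction N; simpl; [ring|]. rewrite IHN. ring. Qed.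

Lemma shift_C (c A B : nat -> Z) (n : nat) (sg : Z) t :
  (forall i, (i < n)%nat -> c i = A i) ->
  (forall i, (i < n)%nat -> c (n + i)%nat = (sg * B i)%Z) ->
  Cs c (n + n) t = Cs A n t + IZR sg * (cos (INR n * t) * Cs B n t - sin (INR n * t) * Sn B n t)
  /\ Sn c (n + n) t = Sn A n t + IZR sg * (sin (INR n * t) * Cs B n t + cos (INR n * t) * Sn B n t).
Proof.
intros H1 H2. unfold Cs, Sn. rewrite !rsum_split. split.
- f_equal; [apply rsum_ext; intros i Hi; rewrite H1 by lia; reflexivity|].
  assert (E : forall i, (i < n)%nat -> IZR (c (n+i)%nat) * cos (INR (n+i) * t) = (IZR sg * cos (INR n * t)) * (IZR (B i) * cos (INR i * t)) + (- IZR sg * sin (INR n * t)) * (IZR (B i) * sin (INR i * t))).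
  { intros i Hi. rewrite H2 by lia. rewrite mult_IZR, plus_INR.
    rewrite Rmult_plus_distr_r, cos_plus. ring. }
  rewrite (rsum_ext _ _ _ E), rsum_lin. ring.
- f_equal; [apply rsum_ext; intros i Hi; rewrite H1 by lia; reflexivity|].
  assert (E : forall i, (i < n)%nat -> IZR (c (n+i)%nat) * sin (INR (n+i) * t) = (IZR sg * sin (INR n * t)) * (IZR (B i) * cos (INR i * t)) + (IZR sg * cos (INR n * t)) * (IZR (B i) * sin (INR i * t))).
  { intros i Hi. rewrite H2 by lia. rewrite mult_IZR, plus_INR.
    rewrite Rmult_plus_distr_r, sin_plus. ring. }
  rewrite (rsum_ext _ _ _ E), rsum_lin. ring.
Qed.

Lemma stepP k t : let n := (2^k)%nat in
  Cs (Pcoef (S k)) (2^(S k)) t = Cs (Pcoef k) n t + (cos (INR n * t) * Cs (Qcoef k) n t - sin (INR n * t) * Sn (Qcoef k) n t)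
  /\ Sn (Pcoef (S k)) (2^(S k)) t = Sn (Pcoef k) n t + (sin (INR n * t) * Cs (Qcoef k) n t + cos (INR n * t) * Sn (Qcoef k) n t).
Proof.
intros n. replace (2^(S k))%nat with (n + n)%nat by (unfold n; simpl; lia).
destruct (shift_C (Pcoef (S k)) (Pcoef k) (Qcoef k) n 1 t) as [E1 E2].
- intros i Hi. rewrite Pcoef_S. unfold coef_add_shift.
  replace (Nat.leb (2^k) i) with false by (symmetry; apply Nat.leb_gt; unfold n in Hi; lia). ring.
- intros i Hi. rewrite Pcoef_S. unfold coef_add_shift.
  replace (Nat.leb (2^k) (n+i)) with true by (symmetry; apply Nat.leb_le; unfold n; lia).
  rewrite (proj1 (RS_zero k (n+i)%nat ltac:(unfold n; lia))).
  replace (n + i - 2^k)%nat with i by (unfold n; lia). ring.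
- rewrite E1, E2. split; ring.
Qed.

Lemma stepQ k t : let n := (2^k)%nat in
  Cs (Qcoef (S k)) (2^(S k)) t = Cs (Pcoef k) n t - (cos (INR n * t) * Cs (Qcoef k) n t - sin (INR n * t) * Sn (Qcoef k) n t)
  /\ Sn (Qcoef (S k)) (2^(S k)) t = Sn (Pcoef k) n t - (sin (INR n * t) * Cs (Qcoef k) n t + cos (INR n * t) * Sn (Qcoef k) n t).
Proof.
intros n. replace (2^(S k))%nat with (n + n)%nat by (unfold n; simpl; lia).
destruct (shift_C (Qcoef (S k)) (Pcoef k) (Qcoef k) n (-1) t) as [E1 E2].
- intros i Hi. rewrite Qcoef_S. unfold coef_sub_shift.
  replace (Nat.leb (2^k) i) with false by (symmetry; apply Nat.leb_gt; unfold n in Hi; lia). ring.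
- intros i Hi. rewrite Qcoef_S. unfold coef_sub_shift.
  replace (Nat.leb (2^k) (n+i)) with true by (symmetry; apply Nat.leb_le; unfold n; lia).
  rewrite (proj1 (RS_zero k (n+i)%nat ltac:(unfold n; lia))).
  replace (n + i - 2^k)%nat with i by (unfold n; lia). ring.
- rewrite E1, E2. split; simpl IZR; ring.
Qed.

Lemma parallelogram k t : Rk true k t + Rk false k t = 2 * INR (2^k).
Proof.
induction k.
- rewrite !Rk_eq. unfold Cs, Sn, Pcoef, Qcoef. simpl. rewrite Rmult_0_l, cos_0, sin_0. ring.
- rewrite !Rk_eq in *. destruct (stepP k t) as [E1 E2]. destruct (stepQ k t) as [E3 E4].
  rewrite E1, E2, E3, E4.
  set (u := cos (INR (2^k) * t)). set (v := sin (INR (2^k) * t)).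
  assert (Huv : u*u + v*v = 1) by (unfold u, v; pose proof (sin2_cos2 (INR (2^k) * t)); unfold Rsqr in *; lra).
  replace (2 ^ S k)%nat with (2 * 2^k)%nat by (simpl; lia). rewrite mult_INR.
  replace (INR 2) with 2 by (simpl; ring). rewrite <- IHk.
  transitivity (2 * (Cs (Pcoef k) (2 ^ k) t ^ 2 + Sn (Pcoef k) (2 ^ k) t ^ 2) + 2 * (u*u+v*v) * (Cs (Qcoef k) (2 ^ k) t ^ 2 + Sn (Qcoef k) (2 ^ k) t ^ 2)); [ring|].
  rewrite Huv. ring.
Qed.

Lemma cos_sin_jpi j : cos (INR j * PI) = (-1)^j /\ sin (INR j * PI) = 0.
Proof.
induction j.
- simpl. rewrite Rmult_0_l, cos_0, sin_0. auto.
- rewrite S_INR. replace ((INR j + 1) * PI) with (INR j * PI + PI) by ring.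
  rewrite neg_cos, neg_sin. destruct IHj as [-> ->]. simpl. split; ring.
Qed.

Lemma pow_m1 j : (-1)^j = 1 \/ (-1)^j = -1.
Proof. induction j; simpl; [auto|]. destruct IHj as [-> | ->]; [right|left]; ring. Qed.

Definition sg (b : bool) (j : nat) : R := (if b then 1 else -1) * (-1)^j.

Lemma grid K b j : let n := (2^(S (S K)))%nat in let t := 2 * PI * INR j / INR n in
  Rk b (S (S K)) t - INR n = sg b j * (4 * Rk true K t - INR n).
Proof.
intros n t.
assert (Hn : INR n = 4 * INR (2^K)) by (unfold n; simpl; rewrite !plus_INR; simpl; ring).
assert (Hm : INR (2^(S K)) * t = INR j * PI).
{ unfold t. rewrite Hn. replace (2^(S K))%nat with (2 * 2^K)%nat by (simpl; lia).
  rewrite mult_INR. simpl (INR 2). assert (INR (2^K) <> 0) by (apply not_0_INR; apply Nat.pow_nonzero; lia). field; auto. }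
destruct (cos_sin_jpi j) as [Hc Hs].
pose proof (parallelogram K t) as Hpar. rewrite !Rk_eq in *.
destruct (stepP K t) as [E1 E2]. destruct (stepQ K t) as [E3 E4].
set (u := cos (INR (2^K) * t)) in *. set (v := sin (INR (2^K) * t)) in *.
assert (Huv : u*u + v*v = 1) by (unfold u, v; pose proof (sin2_cos2 (INR (2^K) * t)); unfold Rsqr in *; lra).
set (al := Cs (Pcoef K) (2^K) t) in *. set (be := Sn (Pcoef K) (2^K) t) in *.
set (ga := Cs (Qcoef K) (2^K) t) in *. set (de := Sn (Qcoef K) (2^K) t) in *.
assert (HXY : (u*ga - v*de)^2 + (v*ga + u*de)^2 = ga^2 + de^2).
{ transitivity ((u*u+v*v)*(ga^2+de^2)); [ring|rewrite Huv; ring]. }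
unfold sg. rewrite Hn.
destruct b.
- destruct (stepP (S K) t) as [F1 F2]. rewrite F1, F2, E1, E2, E3, E4, Hm, Hc, Hs.
  destruct (pow_m1 j) as [-> | ->].
  + ring.
  + transitivity (4 * ((u*ga - v*de)^2 + (v*ga + u*de)^2) - 4 * INR (2^K)); [ring|].
    rewrite HXY. lra.
- destruct (stepQ (S K) t) as [F1 F2]. rewrite F1, F2, E1, E2, E3, E4, Hm, Hc, Hs.
  destruct (pow_m1 j) as [-> | ->].
  + transitivity (4 * ((u*ga - v*de)^2 + (v*ga + u*de)^2) - 4 * INR (2^K)); [ring|].
    rewrite HXY. lra.
  + ring.
Qed.

Lemma rsum_mult_l N a f : a * rsum N f = rsum N (fun i => a * f i).
Proof. induction N; simpl; [ring|]. rewrite <- IHN. ring. Qed.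
Lemma rsum_add N f g : rsum N f + rsum N g = rsum N (fun i => f i + g i).
Proof. induction N; simpl; [ring|]. rewrite <- IHN. ring. Qed.
Lemma rsum_prod N f g : rsum N f * rsum N g = rsum N (fun j => rsum N (fun l => f j * g l)).
Proof.
rewrite Rmult_comm, rsum_mult_l. apply rsum_ext; intros j _.
rewrite Rmult_comm, rsum_mult_l. reflexivity.
Qed.

Definition hK (K : nat) (t : R) := 4 * Rk true K t - INR (2^(S (S K))).

Lemma cos_diff (j l : nat) t : cos (INR j * t) * cos (INR l * t) + sin (INR j * t) * sin (INR l * t)
  = cos (INR ((j - l) + (l - j))%nat * t).
Proof.
rewrite <- cos_minus. destruct (Nat.le_ge_cases l j).
- replace ((j - l) + (l - j))%nat with (j - l)%nat by lia. rewrite minus_INR by lia. f_equal; ring.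
- replace ((j - l) + (l - j))%nat with (l - j)%nat by lia. rewrite minus_INR by lia.
  rewrite <- cos_neg. f_equal; ring.
Qed.

Lemma h_cospoly K : exists p : R -> R, (forall t, hK K t = p (cos t)) /\
  ((forall x, p x = 0) \/ (forall L : list R, NoDup L -> (forall x, In x L -> p x = 0) -> (length L <= 2^K - 1)%nat)).
Proof.
destruct (CP.cospoly (2^K) (2^K - 1) (fun j l => 4 * (IZR (Pcoef K j) * IZR (Pcoef K l))) (fun j l => ((j - l) + (l - j))%nat) (- INR (2^(S (S K))))) as [p [Hp1 Hp2]].
- intros j l Hj Hl. lia.
- exists p. split; [|exact Hp2]. intros t. rewrite <- Hp1. unfold hK. rewrite Rk_eq. simpl (if true then _ else _).
  unfold Cs, Sn. rewrite !Rpow_mult_distr || idtac.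
  replace (rsum (2^K) (fun j => IZR (Pcoef K j) * cos (INR j * t)) ^ 2) with
    (rsum (2^K) (fun j => IZR (Pcoef K j) * cos (INR j * t)) * rsum (2^K) (fun j => IZR (Pcoef K j) * cos (INR j * t))) by ring.
  replace (rsum (2^K) (fun j => IZR (Pcoef K j) * sin (INR j * t)) ^ 2) with
    (rsum (2^K) (fun j => IZR (Pcoef K j) * sin (INR j * t)) * rsum (2^K) (fun j => IZR (Pcoef K j) * sin (INR j * t))) by ring.
  rewrite !rsum_prod, rsum_add, rsum_mult_l.
  rewrite Rplus_comm. unfold Rminus. f_equal.
  apply rsum_ext; intros j _. rewrite rsum_add, rsum_mult_l. apply rsum_ext; intros l _.
  rewrite <- cos_diff. ring.
Qed.

Lemma NoDup_map_inj (f : R -> R) (L : list R) : NoDup L ->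
  (forall x y, In x L -> In y L -> f x = f y -> x = y) -> NoDup (map f L).
Proof.
induction L as [|a L IH]; intros HN Hi; simpl; [constructor|].
inversion HN; subst. constructor.
- intros Hin. apply in_map_iff in Hin. destruct Hin as [x [Hx1 Hx2]].
  assert (x = a) by (apply Hi; simpl; auto). subst. auto.
- apply IH; auto. intros x y Hx Hy. apply Hi; simpl; auto.
Qed.

Lemma cos_2PI_minus x : cos (2 * PI - x) = cos x.
Proof. rewrite cos_minus, cos_2PI, sin_2PI. ring. Qed.

Lemma h_zeros K : (forall t, hK K t = 0) \/
  (forall L, NoDup L -> (forall t, In t L -> 0 <= t < 2 * PI /\ hK K t = 0) -> (length L <= 2 * (2^K - 1))%nat).
Proof.
destruct (h_cospoly K) as [p [Hp [H0 | Hb]]].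
- left. intros t. rewrite Hp. apply H0.
- right. intros L HN HL.
  set (f := fun t => if Rle_dec t PI then true else false).
  rewrite <- (filter_length f L).
  assert (A1 : (length (filter f L) <= 2^K - 1)%nat).
  { rewrite <- (length_map cos). apply Hb.
    - apply NoDup_map_inj; [apply NoDup_filter; auto|].
      intros x y Hx Hy Hxy. apply filter_In in Hx. apply filter_In in Hy.
      destruct Hx as [Hx Hfx]. destruct Hy as [Hy Hfy]. unfold f in *.
      destruct (Rle_dec x PI); [|discriminate]. destruct (Rle_dec y PI); [|discriminate].
      apply cos_inj; auto. split; [apply HL; auto|lra]. split; [apply HL; auto|lra].
    - intros x Hx. apply in_map_iff in Hx. destruct Hx as [t [<- Ht]].
      apply filter_In in Ht. rewrite <- Hp. apply HL. tauto. }
  assert (A2 : (length (filter (fun x => negb (f x)) L) <= 2^K - 1)%nat).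
  { rewrite <- (length_map cos). apply Hb.
    - apply NoDup_map_inj; [apply NoDup_filter; auto|].
      intros x y Hx Hy Hxy. apply filter_In in Hx. apply filter_In in Hy.
      destruct Hx as [Hx Hfx]. destruct Hy as [Hy Hfy]. unfold f in *.
      destruct (Rle_dec x PI); [discriminate|]. destruct (Rle_dec y PI); [discriminate|].
      destruct (HL x Hx) as [[Hx1 Hx2] _]. destruct (HL y Hy) as [[Hy1 Hy2] _].
      rewrite <- (cos_2PI_minus x), <- (cos_2PI_minus y) in Hxy.
      apply cos_inj in Hxy; [lra| lra | lra].
    - intros x Hx. apply in_map_iff in Hx. destruct Hx as [t [<- Ht]].
      apply filter_In in Ht. rewrite <- Hp. apply HL. tauto. }
  lia.
Qed.

Lemma cont_C c N : continuity (fun t => Cs c N t).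
Proof.
unfold Cs. induction N; simpl.
- apply continuity_const. intros x y; reflexivity.
- change (continuity (plus_fct (fun t => rsum N (fun j => IZR (c j) * cos (INR j * t))) (fun t => IZR (c N) * cos (INR N * t)))).
  apply continuity_plus; auto. reg.
Qed.
Lemma cont_S c N : continuity (fun t => Sn c N t).
Proof.
unfold Sn. induction N; simpl.
- apply continuity_const. intros x y; reflexivity.
- change (continuity (plus_fct (fun t => rsum N (fun j => IZR (c j) * sin (INR j * t))) (fun t => IZR (c N) * sin (INR N * t)))).
  apply continuity_plus; auto. reg.
Qed.
Lemma cont_Rk b k a : continuity (fun t => a * Rk b k t - INR (2^(S (S k)))).
Proof.
assert (H1 := cont_C (if b then Pcoef k else Qcoef k) (2^k)).
assert (H2 := cont_S (if b then Pcoef k else Qcoef k) (2^k)).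
change (continuity (minus_fct (mult_fct (fct_cte a) (plus_fct (mult_fct (fun t => Cs (if b then Pcoef k else Qcoef k) (2^k) t) (mult_fct (fun t => Cs (if b then Pcoef k else Qcoef k) (2^k) t) (fct_cte 1))) (mult_fct (fun t => Sn (if b then Pcoef k else Qcoef k) (2^k) t) (mult_fct (fun t => Sn (if b then Pcoef k else Qcoef k) (2^k) t) (fct_cte 1))))) (fct_cte (INR (2^(S (S k))))))).
repeat first [apply continuity_minus | apply continuity_mult | apply continuity_plus | apply continuity_const; intros x y; reflexivity | assumption].
Qed.

Section Main.
Variable b : bool.
Variable K : nat.

Definition nn : nat := (2^(S (S K)))%nat.
Definition tj (j : nat) : R := 2 * PI * INR j / INR nn.
Definition gK (t : R) : R := 1 * Rk b (S (S K)) t - INR (2^(S (S K))).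

Lemma nn_eq : nn = (4 * 2^K)%nat.
Proof. unfold nn. simpl. lia. Qed.
Lemma nn_pos : 0 < INR nn.
Proof. apply lt_0_INR. rewrite nn_eq. pose proof (Nat.pow_nonzero 2 K). lia. Qed.

Lemma tj_le j j' : (j <= j')%nat -> tj j <= tj j'.
Proof.
intros H. unfold tj, Rdiv. pose proof nn_pos. pose proof PI_RGT_0.
apply Rmult_le_compat_r; [left; apply Rinv_0_lt_compat; auto|].
apply Rmult_le_compat_l; [lra|]. apply le_INR; auto.
Qed.
Lemma tj_lt j j' : (j < j')%nat -> tj j < tj j'.
Proof.
intros H. unfold tj, Rdiv. pose proof nn_pos. pose proof PI_RGT_0.
apply Rmult_lt_compat_r; [apply Rinv_0_lt_compat; auto|].
apply Rmult_lt_compat_l; [lra|]. apply lt_INR; auto.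
Qed.
Lemma tj_0 : tj 0 = 0.
Proof. unfold tj. simpl. field. pose proof nn_pos. lra. Qed.
Lemma tj_n : tj nn = 2 * PI.
Proof. unfold tj. field. pose proof nn_pos. lra. Qed.

Lemma cont_g : continuity gK.
Proof.
assert (H1 := cont_C (if b then Pcoef (S (S K)) else Qcoef (S (S K))) (2^(S (S K)))).
assert (H2 := cont_S (if b then Pcoef (S (S K)) else Qcoef (S (S K))) (2^(S (S K)))).
unfold gK.
change (continuity (minus_fct (mult_fct (fct_cte 1) (plus_fct (mult_fct (fun t => Cs (if b then Pcoef (S (S K)) else Qcoef (S (S K))) (2^(S (S K))) t) (mult_fct (fun t => Cs (if b then Pcoef (S (S K)) else Qcoef (S (S K))) (2^(S (S K))) t) (fct_cte 1))) (mult_fct (fun t => Sn (if b then Pcoef (S (S K)) else Qcoef (S (S K))) (2^(S (S K))) t) (mult_fct (fun t => Sn (if b then Pcoef (S (S K)) else Qcoef (S (S K))) (2^(S (S K))) t) (fct_cte 1))))) (fct_cte (INR (2^(S (S K))))))).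
repeat first [apply continuity_minus | apply continuity_mult | apply continuity_plus | apply continuity_const; intros x y; reflexivity | assumption].
Qed.

Lemma cont_h : continuity (hK K).
Proof.
assert (H1 := cont_C (Pcoef K) (2^K)). assert (H2 := cont_S (Pcoef K) (2^K)).
unfold hK.
change (continuity (minus_fct (mult_fct (fct_cte 4) (plus_fct (mult_fct (fun t => Cs (Pcoef K) (2^K) t) (mult_fct (fun t => Cs (Pcoef K) (2^K) t) (fct_cte 1))) (mult_fct (fun t => Sn (Pcoef K) (2^K) t) (mult_fct (fun t => Sn (Pcoef K) (2^K) t) (fct_cte 1))))) (fct_cte (INR (2^(S (S K))))))).
repeat first [apply continuity_minus | apply continuity_mult | apply continuity_plus | apply continuity_const; intros x y; reflexivity | assumption].
Qed.

Lemma g_grid j : gK (tj j) = sg b j * hK K (tj j).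
Proof. unfold gK, hK, tj, nn. rewrite Rmult_1_l. apply grid. Qed.

Lemma sg_S j : sg b (S j) = - sg b j.
Proof. unfold sg. simpl. ring. Qed.
Lemma sg_sq j : sg b j * sg b j = 1.
Proof. unfold sg. destruct (pow_m1 j) as [-> | ->]; destruct b; ring. Qed.

Definition goodb (j : nat) : bool :=
  if Rle_dec (gK (tj j) * gK (tj (S j))) 0 then true else false.

Definition zg (j : nat) : R :=
  match Rle_dec (gK (tj j) * gK (tj (S j))) 0 with
  | left H => proj1_sig (IVT_cor gK (tj j) (tj (S j)) cont_g (tj_le j (S j) (Nat.le_succ_diag_r j)) H)
  | right _ => 0
  end.

Lemma zg_spec j : goodb j = true -> tj j <= zg j <= tj (S j) /\ gK (zg j) = 0.
Proof.
unfold goodb, zg. destruct (Rle_dec _ _) as [H|H]; [|discriminate].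
intros _. destruct (IVT_cor _ _ _ _ _ _) as [z Hz]. simpl. exact Hz.
Qed.

Definition zh (j : nat) : R :=
  match Rle_dec (hK K (tj j) * hK K (tj (S j))) 0 with
  | left H => proj1_sig (IVT_cor (hK K) (tj j) (tj (S j)) cont_h (tj_le j (S j) (Nat.le_succ_diag_r j)) H)
  | right _ => 0
  end.

Lemma zh_spec j : goodb j = false -> tj j < zh j < tj (S j) /\ hK K (zh j) = 0.
Proof.
unfold goodb. destruct (Rle_dec _ _) as [H|H]; [discriminate|]. intros _.
rewrite !g_grid, sg_S in H.
assert (Hh : hK K (tj j) * hK K (tj (S j)) < 0).
{ assert (E : sg b j * hK K (tj j) * (- sg b j * hK K (tj (S j))) = - (sg b j * sg b j) * (hK K (tj j) * hK K (tj (S j)))) by ring.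
  rewrite E, sg_sq in H. lra. }
unfold zh. destruct (Rle_dec _ _) as [H2|H2]; [|lra].
destruct (IVT_cor _ _ _ _ _ _) as [z [[Hz1 Hz2] Hz3]]. simpl.
split; [|exact Hz3]. split.
- destruct Hz1 as [Hz1|Hz1]; auto. subst z. rewrite Hz3 in Hh. lra.
- destruct Hz2 as [Hz2|Hz2]; auto. subst z. rewrite Hz3 in Hh. lra.
Qed.

Definition bad := filter (fun j => negb (goodb j)) (seq 0 nn).

Lemma NoDup_map_inj_nat (f : nat -> R) (L : list nat) : NoDup L ->
  (forall x y, In x L -> In y L -> f x = f y -> x = y) -> NoDup (map f L).
Proof.
induction L as [|a L IH]; intros HN Hi; simpl; [constructor|].
inversion HN; subst. constructor.
- intros Hin. apply in_map_iff in Hin. destruct Hin as [x [Hx1 Hx2]].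
  assert (x = a) by (apply Hi; simpl; auto). subst. auto.
- apply IH; auto. intros x y Hx Hy. apply Hi; simpl; auto.
Qed.

Lemma bad_bound : (length bad <= 2 * (2^K - 1))%nat.
Proof.
destruct (h_zeros K) as [H0 | HB].
- destruct bad as [|j l] eqn:E; simpl; [lia|].
  assert (Hj : In j bad) by (rewrite E; simpl; auto).
  unfold bad in Hj. apply filter_In in Hj. destruct Hj as [_ Hj].
  unfold goodb in Hj. destruct (Rle_dec _ _) as [Hr|Hr]; [discriminate|].
  exfalso. apply Hr. rewrite !g_grid, !H0. lra.
- rewrite <- (length_map zh). apply HB.
  + apply NoDup_map_inj_nat; [apply NoDup_filter, seq_NoDup|].
    assert (C : forall x y, In x bad -> In y bad -> (x < y)%nat -> zh x <> zh y).
    { intros x y Hx Hy Hxy E.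
      unfold bad in Hx, Hy. apply filter_In in Hx. apply filter_In in Hy.
      destruct Hx as [_ Hx]. destruct Hy as [_ Hy].
      apply Bool.negb_true_iff in Hx. apply Bool.negb_true_iff in Hy.
      destruct (zh_spec x Hx) as [[A1 A2] _]. destruct (zh_spec y Hy) as [[B1 B2] _].
      pose proof (tj_le (S x) y Hxy). lra. }
    intros x y Hx Hy E. destruct (lt_eq_lt_dec x y) as [[Hlt|Heq]|Hgt]; auto.
    * exfalso; exact (C x y Hx Hy Hlt E).
    * exfalso; exact (C y x Hy Hx Hgt (eq_sym E)).
  + intros t Ht. apply in_map_iff in Ht. destruct Ht as [j [<- Hj]].
    unfold bad in Hj. apply filter_In in Hj. destruct Hj as [Hj1 Hj].
    apply in_seq in Hj1. apply Bool.negb_true_iff in Hj.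
    destruct (zh_spec j Hj) as [[A1 A2] A3]. split; [|exact A3].
    pose proof (tj_le 0 j ltac:(lia)). pose proof (tj_le (S j) nn ltac:(lia)).
    rewrite tj_0 in *. rewrite tj_n in *. lra.
Qed.

Definition goods := filter goodb (seq 0 nn).

Lemma goods_len : (2 * 2^K + 2 <= length goods)%nat.
Proof.
pose proof (filter_length goodb (seq 0 nn)) as H. rewrite length_seq in H.
pose proof bad_bound. unfold bad, goods in *. pose proof nn_eq.
pose proof (Nat.pow_nonzero 2 K). lia.
Qed.

Lemma goods_spec j : In j goods -> (j < nn)%nat /\ goodb j = true.
Proof. unfold goods. rewrite filter_In, in_seq. lia. Qed.

Lemma gK_2PI : gK (2 * PI) = gK 0.
Proof.
assert (HC : forall c N, Cs c N (2*PI) = Cs c N 0).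
{ intros c N. unfold Cs. apply rsum_ext. intros i _. f_equal. rewrite Rmult_0_r. rewrite <- (cos_period 0 i). f_equal. ring. }
assert (HS : forall c N, Sn c N (2*PI) = Sn c N 0).
{ intros c N. unfold Sn. apply rsum_ext. intros i _. f_equal. rewrite Rmult_0_r. rewrite <- (sin_period 0 i). f_equal. ring. }
unfold gK. rewrite !Rk_eq, HC, HS.
reflexivity.
Qed.

Definition zw (j : nat) : R := if Req_dec_T (zg j) (2 * PI) then 0 else zg j.

Lemma zw_spec j : In j goods -> 0 <= zw j < 2 * PI /\ gK (zw j) = 0.
Proof.
intros Hj. destruct (goods_spec j Hj) as [Hn Hg].
destruct (zg_spec j Hg) as [[A1 A2] A3].
pose proof (tj_le 0 j ltac:(lia)). pose proof (tj_le (S j) nn ltac:(lia)).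
rewrite tj_0 in *. rewrite tj_n in *. pose proof PI_RGT_0.
unfold zw. destruct (Req_dec_T (zg j) (2 * PI)) as [E|E].
- split; [lra|]. rewrite <- gK_2PI, <- E. exact A3.
- split; [lra|exact A3].
Qed.

Lemma even_nn_1 : Nat.even (nn - 1) = false.
Proof.
rewrite nn_eq. pose proof (Nat.pow_nonzero 2 K).
replace (4 * 2^K - 1)%nat with (2 * (2 * 2^K - 1) + 1)%nat by lia.
rewrite Nat.even_add, Nat.even_mul. reflexivity.
Qed.

Lemma zw_inj_lt x y : In x goods -> In y goods -> Nat.even x = Nat.even y -> (x < y)%nat -> zw x <> zw y.
Proof.
intros Hx Hy Hp Hxy E.
destruct (goods_spec x Hx) as [Hxn Hxg]. destruct (goods_spec y Hy) as [Hyn Hyg].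
assert (Hs : y <> S x).
{ intros ->. rewrite Nat.even_succ, <- Nat.negb_even in Hp. destruct (Nat.even x); discriminate. }
destruct (zg_spec x Hxg) as [[A1 A2] _]. destruct (zg_spec y Hyg) as [[B1 B2] _].
pose proof (tj_lt (S x) y ltac:(lia)).
pose proof (tj_le (S y) nn ltac:(lia)). rewrite tj_n in *.
unfold zw in E. destruct (Req_dec_T (zg x) (2 * PI)) as [Ex|Ex]; destruct (Req_dec_T (zg y) (2 * PI)) as [Ey|Ey]; try lra.
(* zg y = 2PI, zg x = 0 *)
assert (x = 0%nat).
{ destruct x; auto. pose proof (tj_lt 0 (S x) ltac:(lia)). rewrite tj_0 in *. lra. }
assert (S y = nn).
{ destruct (Nat.eq_dec (S y) nn); auto. pose proof (tj_lt (S y) nn ltac:(lia)). rewrite tj_n in *. lra. }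
subst x. replace y with (nn - 1)%nat in Hp by lia. rewrite even_nn_1 in Hp. simpl in Hp. discriminate.
Qed.

Lemma zw_NoDup (L : list nat) : NoDup L -> (forall j, In j L -> In j goods) ->
  (forall x y, In x L -> In y L -> Nat.even x = Nat.even y) -> NoDup (map zw L).
Proof.
intros HN HL Hp. apply NoDup_map_inj_nat; auto.
intros x y Hx Hy E. destruct (lt_eq_lt_dec x y) as [[Hlt|Heq]|Hgt]; auto.
- exfalso. exact (zw_inj_lt x y (HL x Hx) (HL y Hy) (Hp x y Hx Hy) Hlt E).
- exfalso. exact (zw_inj_lt y x (HL y Hy) (HL x Hx) (Hp y x Hy Hx) Hgt (eq_sym E)).
Qed.

Lemma filter_and_len (f e : nat -> bool) (l : list nat) :
  length (filter f l) = (length (filter (fun x => andb (f x) (e x)) l) + length (filter (fun x => andb (f x) (negb (e x))) l))%nat.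
Proof.
induction l as [|a l IH]; simpl; auto.
destruct (f a), (e a); simpl; rewrite IH; lia.
Qed.

End Main.

Lemma part1 b K (L : list nat) : NoDup L -> (forall j, In j L -> In j (goods b K)) ->
  (forall x y, In x L -> In y L -> Nat.even x = Nat.even y) -> (2^K + 1 <= length L)%nat ->
  exists ts : list R, NoDup ts /\ (forall t, In t ts -> 0 <= t < 2*PI /\ Rk b (S (S K)) t = INR (2^(S (S K))))
    /\ INR (length ts) >= INR (2^(S (S K))) / 4 + 1.
Proof.
intros HN HL Hp Hlen. exists (map (zw b K) L). split; [|split].
- apply zw_NoDup; auto.
- intros t Ht. apply in_map_iff in Ht. destruct Ht as [j [<- Hj]].
  destruct (zw_spec b K j (HL j Hj)) as [A1 A2]. split; auto. unfold gK in A2. lra.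
- rewrite length_map. apply le_INR in Hlen. rewrite plus_INR in Hlen.
  pose proof (nn_eq K) as E. unfold nn in E. rewrite E, mult_INR. simpl (INR 4).
  simpl (INR 1) in Hlen. lra.
Qed.

Theorem theorem2p1 (usesP : bool) (k : nat) (hk : (2 <= k)%nat) :
  let n := (2 ^ k)%nat in
  (exists ts : list R,
      NoDup ts
      /\ (forall t, In t ts -> 0 <= t < 2 * PI /\ Rk usesP k t = INR n)
      /\ INR (length ts) >= INR n / 4 + 1)
  /\
  (exists js : list nat,
      NoDup js
      /\ (forall j, In j js ->
            (j < n)%nat
            /\ exists t, 2 * PI * INR j / INR n <= t <= 2 * PI * INR (S j) / INR n
                         /\ Rk usesP k t = INR n)
      /\ INR (length js) >= INR n / 2 + 2).
Proof.
destruct k as [|[|K]]; [lia|lia|]. intros n. split.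
- pose proof (filter_and_len (goodb usesP K) Nat.even (seq 0 (nn K))) as H.
  pose proof (goods_len usesP K) as Hg. unfold goods in Hg. rewrite H in Hg.
  assert (HP : forall (e : nat -> bool), (forall x, In x (filter (fun x => andb (goodb usesP K x) (e x)) (seq 0 (nn K))) -> In x (goods usesP K))).
  { intros e x Hx. apply filter_In in Hx. unfold goods. apply filter_In.
    destruct Hx as [Hx1 Hx2]. apply Bool.andb_true_iff in Hx2. tauto. }
  destruct (Nat.le_gt_cases (2^K + 1) (length (filter (fun x => andb (goodb usesP K x) (Nat.even x)) (seq 0 (nn K))))) as [HE|HE].
  + apply (part1 usesP K _ (NoDup_filter _ (seq_NoDup _ _)) (HP Nat.even)); auto.
    intros x y Hx Hy. apply filter_In in Hx. apply filter_In in Hy.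
    destruct Hx as [_ Hx]. destruct Hy as [_ Hy].
    apply Bool.andb_true_iff in Hx. apply Bool.andb_true_iff in Hy. destruct Hx, Hy. congruence.
  + apply (part1 usesP K _ (NoDup_filter _ (seq_NoDup _ _)) (HP (fun x => negb (Nat.even x)))); [|lia].
    intros x y Hx Hy. apply filter_In in Hx. apply filter_In in Hy.
    destruct Hx as [_ Hx]. destruct Hy as [_ Hy].
    apply Bool.andb_true_iff in Hx. apply Bool.andb_true_iff in Hy. destruct Hx as [_ Hx], Hy as [_ Hy].
    apply Bool.negb_true_iff in Hx. apply Bool.negb_true_iff in Hy. congruence.
- exists (goods usesP K). split; [|split].
  + unfold goods. apply NoDup_filter, seq_NoDup.
  + intros j Hj. destruct (goods_spec usesP K j Hj) as [Hn Hgd]. split; [exact Hn|].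
    exists (zg usesP K j). destruct (zg_spec usesP K j Hgd) as [A1 A2]. split; [exact A1|].
    unfold gK in A2. unfold n. lra.
  + pose proof (goods_len usesP K) as Hg. apply le_INR in Hg.
    rewrite plus_INR, mult_INR in Hg.
    pose proof (nn_eq K) as E. unfold nn in E. unfold n. rewrite E, mult_INR. simpl (INR 4).
    simpl (INR 2) in Hg. lra.
Qed.
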